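(* Let $\mathcal{S}=\langle\mathcal{L},\vdash\rangle$ be a logical structure with $\mathcal{L}$ infinite, and let $\varrho\subseteq\mathcal{P}(\mathcal{L})\times\mathcal{L}$ have finite reach. Then for every finite $\Gamma\subseteq\mathcal{L}$ there exists $\beta\in\mathcal{L}$ such that $\Gamma\not\vdash^\varrho\beta$. The same holds with $\vdash^{p\varrho}$ in place of $\vdash^\varrho$.
   Context: A logical structure is a pair $\langle\mathcal{L},\vdash\rangle$ with $\mathcal{L}$ a set and $\vdash\subseteq\mathcal{P}(\mathcal{L})\times\mathcal{L}$ arbitrary. For $\varrho\subseteq\mathcal{P}(\mathcal{L})\times\mathcal{L}$: $\Gamma\vdash^\varrho\alpha$ iff there is $\Delta\subseteq\Gamma$ with $(\Delta,\alpha)\in\varrho$ and $\Delta\vdash\alpha$; $\Gamma\vdash^{p\varrho}\alpha$ iff there is a nonempty $\Delta\subseteq\Gamma$ with $(\Delta,\alpha)\in\varrho$ and $\Delta\vdash\alpha$. A relation $\varrho\subseteq A\times B$ has finite reach if for every $a\in A$ the set $\{b\in B\mid (a,b)\in\varrho\}$ is finite. *)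

(* Defs.v *)
From Stdlib Require Import List.

Definition subset {L : Type} (A B : L -> Prop) : Prop := forall x, A x -> B x.

Definition finite_set {L : Type} (A : L -> Prop) : Prop :=
  exists l : list L, forall x, A x <-> In x l.

Definition infinite_type (L : Type) : Prop :=
  ~ exists l : list L, forall x : L, In x l.

Definition finite_reach {A B : Type} (rho : A -> B -> Prop) : Prop :=
  forall a : A, finite_set (fun b => rho a b).

Definition vdash_rho {L : Type} (vdash : (L -> Prop) -> L -> Prop)
  (rho : (L -> Prop) -> L -> Prop) (Gamma : L -> Prop) (alpha : L) : Prop :=
  exists Delta : L -> Prop, subset Delta Gamma /\ rho Delta alpha /\ vdash Delta alpha.

Definition vdash_prho {L : Type} (vdash : (L -> Prop) -> L -> Prop)
  (rho : (L -> Prop) -> L -> Prop) (Gamma : L -> Prop) (alpha : L) : Prop :=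
  exists Delta : L -> Prop, (exists x, Delta x) /\ subset Delta Gamma /\
    rho Delta alpha /\ vdash Delta alpha.

(* Main.v *)
Require Import Defs.
From Stdlib Require Import List Classical FunctionalExtensionality PropExtensionality.

Fixpoint pow {L : Type} (l : list L) : list (list L) :=
  match l with
  | nil => nil :: nil
  | a :: l' => map (cons a) (pow l') ++ pow l'
  end.

Lemma sub_repr {L : Type} (l : list L) : forall (D : L -> Prop),
  (forall x, D x -> In x l) -> exists s, In s (pow l) /\ forall x, D x <-> In x s.
Proof.
  induction l as [|a l IH]; intros D HD.
  - exists nil. split. left; reflexivity. intros x; split; [apply HD|intros []].
  - destruct (classic (D a)) as [Ha|Ha].
    + destruct (IH (fun x => D x /\ x <> a)) as [s [Hs Hx]].
      { intros x [Dx Nx]. destruct (HD x Dx); [congruence|assumption]. }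
      exists (a :: s). split.
      * simpl. apply in_or_app. left. apply in_map. exact Hs.
      * intros x. split.
        -- intros Dx. destruct (classic (x = a)) as [E|E].
           ++ left; congruence.
           ++ right; apply Hx; auto.
        -- intros [E|I]. subst; exact Ha. apply Hx in I; tauto.
    + destruct (IH D) as [s [Hs Hx]].
      { intros x Dx. destruct (HD x Dx); [subst; contradiction|assumption]. }
      exists s. split; [simpl; apply in_or_app; right; exact Hs | exact Hx].
Qed.

Lemma cover {L : Type} (rho : (L -> Prop) -> L -> Prop) :
  finite_reach rho -> forall S : list (list L), exists m : list L,
  forall s, In s S -> forall b, rho (fun x => In x s) b -> In b m.
Proof.
  intros Hf S. induction S as [|s0 S [m Hm]].
  - exists nil. intros s [].
  - destruct (Hf (fun x => In x s0)) as [m0 Hm0].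
    exists (m0 ++ m). intros s [E|I] b Hb; apply in_or_app.
    + subst. left. apply Hm0. exact Hb.
    + right. eapply Hm; eauto.
Qed.

Theorem theorem3p15 (L : Type) (vdash : (L -> Prop) -> L -> Prop)
  (rho : (L -> Prop) -> L -> Prop) :
  infinite_type L ->
  finite_reach rho ->
  forall Gamma : L -> Prop, finite_set Gamma ->
    (exists beta : L, ~ vdash_rho vdash rho Gamma beta) /\
    (exists beta : L, ~ vdash_prho vdash rho Gamma beta).
Proof.
  intros Hinf Hf Gamma [l Hl].
  destruct (cover rho Hf (pow l)) as [m Hm].
  assert (Hb : exists beta, ~ In beta m).
  { apply NNPP. intros N. apply Hinf. exists m. intros x.
    apply NNPP. intros Nx. apply N. exists x. exact Nx. }
  destruct Hb as [beta Hbeta].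
  assert (K : forall D, subset D Gamma -> rho D beta -> False).
  { intros D HD HR. destruct (sub_repr l D) as [s [Hs Hx]].
    { intros x Dx. apply Hl. apply HD. exact Dx. }
    assert (E : D = fun x => In x s).
    { apply functional_extensionality. intros x. apply propositional_extensionality. apply Hx. }
    subst D. apply Hbeta. eapply Hm; eauto. }
  split; exists beta.
  - intros [D [H1 [H2 _]]]. eauto.
  - intros [D [_ [H1 [H2 _]]]]. eauto.
Qed.
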